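(* Let $h\in\mathbb N$ and $u,v\in\mathfrak S_n$ with $u<v$, and let $F$ be an $h$-flipclass of paths from $u$ to $v$. The following are equivalent: (1) the map $i_{TS_F}:F\to P^{TS_F}_h((u,0),(v,h))$ is bijective, i.e. every path of $TS_F$ from $(u,0)$ to $(v,h)$ is effective; (2) for all vertices $(a,i),(b,i+2)$ of $TS_F$ with $(a,i)\le(b,i+2)$ in the poset induced by $TS_F$, the interval $[(a,i),(b,i+2)]$ is a diamond (contains exactly two elements besides its endpoints); and the flip operators $\bar f_1,\dots,\bar f_{h-1}$ act transitively on $P^{TS_F}_h((u,0),(v,h))$, where $\bar f_i$ sends a path $((a_0,0),\dots,(a_h,h))$ to the path obtained by replacing $(a_i,i)$ by the other middle element of the diamond $[(a_{i-1},i-1),(a_{i+1},i+1)]$.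
   Context: $\mathfrak S_n$ is the symmetric group on $[n]$, $T$ its transpositions, $\ell$ the length w.r.t. simple transpositions. The Bruhat graph $B(\mathfrak S_n)$ has an edge $x\xrightarrow{t}y$ iff $yx^{-1}=t\in T$ and $\ell(x)<\ell(y)$; Bruhat order: $x\le y$ iff there is a directed path from $x$ to $y$. $P_h(u,v)$ is the set of paths $u=x_0\to\cdots\to x_h=v$ of length $h$. Between two fixed vertices there are $0$ or $2$ paths of length $2$, each the flip of the other; the $i$-th flip operator $f_i$ on $P_h(u,v)$ replaces $x_{i-1}\to x_i\to x_{i+1}$ by its flip; orbits of $\langle f_1,\dots,f_{h-1}\rangle$ on $P_h(u,v)$ are the $h$-flipclasses of paths from $u$ to $v$. The time-support graph $TS_F$ has vertices $(a,i)$ ($0\le i\le h$) such that some path $(x_0,\dots,x_h)\in F$ has $x_i=a$, and edges $(a,i)\xrightarrow{t}(b,i+1)$ whenever some path of $F$ contains $x_i=a\xrightarrow{t}b=x_{i+1}$; it is acyclic and induces a partial order (reachability) on its vertices. $P^{TS_F}_h((u,0),(v,h))$ is the set of paths of length $h$ from $(u,0)$ to $(v,h)$ in $TS_F$, and $i_{TS_F}$ sends $(x_0,\dots,x_h)\in F$ to $((x_0,0),\dots,(x_h,h))$ (it is always injective). A path of $TS_F$ is effective if it is a subpath of $i_{TS_F}(\Gamma)$ for some $\Gamma\in F$. *)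

(* Defs.v *)
From mathcomp Require Import all_boot all_fingroup.
Set Implicit Arguments. Unset Strict Implicit. Unset Printing Implicit Defensive.

Section Bruhat.
Variable n : nat.
Local Notation Sn := {perm 'I_n}.

Definition is_transp (t : Sn) : bool :=
  [exists i : 'I_n, exists j : 'I_n, (i != j) && (t == tperm i j)].

(* Coxeter length = number of inversions *)
Definition ell (x : Sn) : nat :=
  #|[set p : 'I_n * 'I_n | (p.1 < p.2) && (x p.2 < x p.1)]|.

Definition bedge (x y : Sn) : bool := is_transp (y * x^-1)%g && (ell x < ell y).

Definition bruhat_le (x y : Sn) : bool := connect bedge x y.
Definition bruhat_lt (x y : Sn) : bool := (x != y) && bruhat_le x y.

Definition tat (T : Type) (k : nat) (t : k.+1.-tuple T) (i : nat) : T :=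
  tnth t (inord i).

Definition is_bpath (h : nat) (u v : Sn) (G : h.+1.-tuple Sn) : bool :=
  [&& tat G 0 == u, tat G h == v &
      [forall i : 'I_h, bedge (tat G i) (tat G i.+1)]].

Definition Pset (h : nat) (u v : Sn) : {set h.+1.-tuple Sn} :=
  [set G | @is_bpath h u v G].

(* the other middle vertex of the (0 or 2) length-2 paths x -> . -> z, besides y *)
Definition flip_mid (x y z : Sn) : Sn :=
  odflt y [pick w | [&& w != y, bedge x w & bedge w z]].

Definition flip (h : nat) (i : nat) (G : h.+1.-tuple Sn) : h.+1.-tuple Sn :=
  [tuple (if (j : nat) == i then flip_mid (tat G i.-1) (tat G i) (tat G i.+1)
          else tnth G j) | j < h.+1].

End Bruhat.

(* y is obtained from x by applying a finite word in the operators f i, lo <= i <= hi;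
   for involutions this is the orbit of x under the generated group *)
Definition gen_reach (T : Type) (f : nat -> T -> T) (lo hi : nat) (x y : T) : Prop :=
  exists w : seq nat, all (fun i => lo <= i <= hi) w /\ foldr f x w = y.

Section TimeSupport.
Variables (n h : nat).
Local Notation Sn := {perm 'I_n}.
Local Notation V := (Sn * 'I_h.+1)%type.
Variable F : {set h.+1.-tuple Sn}.

Definition flipclass (u v : Sn) : Prop :=
  exists2 G, G \in @Pset n h u v &
    (forall G', G' \in F <-> gen_reach (@flip n h) 1 h.-1 G G').

Definition TSvert : {set V} := [set p : V | [exists G in F, tnth G p.2 == p.1]].

Definition TSedge (p q : V) : bool :=
  ((q.2 : nat) == (p.2 : nat).+1) &&
  [exists G in F, (tnth G p.2 == p.1) && (tnth G q.2 == q.1)].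

Definition TSle (p q : V) : bool := connect TSedge p q.

Definition TSinterval (p q : V) : {set V} :=
  [set w in TSvert | TSle p w && TSle w q].

Definition diamond (p q : V) : bool := #|TSinterval p q :\ p :\ q| == 2.

Definition is_TSpath (u v : Sn) (p : h.+1.-tuple V) : bool :=
  [&& tat p 0 == (u, ord0), tat p h == (v, ord_max) &
      [forall i : 'I_h, TSedge (tat p i) (tat p i.+1)]].

Definition PTS (u v : Sn) : {set h.+1.-tuple V} := [set p | is_TSpath u v p].

Definition iTS (G : h.+1.-tuple Sn) : h.+1.-tuple V := [tuple (tnth G i, i) | i < h.+1].

Definition TSmid (x y z : V) : V :=
  odflt y [pick w in TSinterval x z | [&& w != x, w != z & w != y]].

Definition fbar (i : nat) (p : h.+1.-tuple V) : h.+1.-tuple V :=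
  [tuple (if (j : nat) == i then TSmid (tat p i.-1) (tat p i) (tat p i.+1)
          else tnth p j) | j < h.+1].

End TimeSupport.

(* Main.v *)
Require Import Defs.
From mathcomp Require Import all_boot all_fingroup.
From mathcomp Require Import zify.
Set Implicit Arguments. Unset Strict Implicit. Unset Printing Implicit Defensive.

Lemma ne_val m (a b : 'I_m) : a <> b -> (a : nat) <> b.
Proof. by move=> H E; apply: H; apply: val_inj. Qed.

Ltac gen_ords := repeat match goal with |- context [nat_of_ord ?t] =>
  let a := fresh "a" in set a := nat_of_ord t in *; clearbody a end.

Ltac tpcase := repeat match goal with
   | |- context [fun_of_perm.body (tperm ?x ?y) ?z] => is_var z; case: (tpermP x y z) => [?|?|? ?]; subst
   end.
Ltac tpsolve := tpcase; try congruence.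

Section TT.
Variable T : finType.

Lemma supp_tt (e f g h : T) (tau : T -> T) : e <> f ->
  (forall k, tperm e f (tperm g h k) = tau k) -> (exists k0, tau k0 <> k0) -> tau e <> e.
Proof.
move=> ef Q [k0 Hk0] E; move: (Q e); rewrite E.
tpcase; move=> Hx; try congruence; apply: Hk0; rewrite -Q;
  first [by rewrite tpermK | by rewrite tpermC tpermK].
Qed.

Lemma tt_disj (a b c d e f g h : T) : a <> b -> c <> d -> e <> f -> g <> h ->
  c <> a -> c <> b -> d <> a -> d <> b ->
  (forall k, tperm e f (tperm g h k) = tperm a b (tperm c d k)) ->
  tperm e f = tperm a b \/ tperm e f = tperm c d.
Proof.
move=> ab cd ef gh ca cb da db Q.
pose tau k := tperm a b (tperm c d k).
have Q' k : tperm e f (tperm g h k) = tau k by rewrite Q.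
have inv k : tau (tau k) = k by rewrite /tau; tpsolve.
have k0 : exists k0, tau k0 <> k0 by exists a; rewrite /tau; tpsolve.
have ne := supp_tt ef Q' k0.
have gEe : tperm g h e = e.
  case: (tpermP g h e) => [Eg|Eh|]; last by [].
  - subst g; exfalso.
    have hf : h <> f.
      move=> E; subst h; move: (Q a); tpsolve.
    move: (inv e); rewrite -!Q'; tpsolve.
  - subst h; exfalso.
    have hf : g <> f.
      move=> E; subst g; move: (Q a); tpsolve.
    move: (inv e); rewrite -!Q'; tpsolve.
have tf : tau e = f by rewrite -Q' gEe tpermL.
move: ne tf; rewrite /tau; tpcase; move=> H1 H2; subst; try congruence;
  first [by left | by right | by left; rewrite tpermC | by right; rewrite tpermC].
Qed.

Lemma tt_supp3 (s a c e f g h : T) : s <> a -> s <> c -> a <> c -> e <> f ->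
  (forall k, tperm e f (tperm g h k) = tperm s a (tperm s c k)) ->
  [\/ tperm e f = tperm s a, tperm e f = tperm s c | tperm e f = tperm a c].
Proof.
move=> sa sc ac ef Q.
pose tau k := tperm s a (tperm s c k).
have Q' k : tperm e f (tperm g h k) = tau k by rewrite Q.
have k0 : exists k0, tau k0 <> k0 by exists s; rewrite /tau; tpsolve.
have ne := supp_tt ef Q' k0.
have Q'' k : tperm f e (tperm g h k) = tau k by rewrite tpermC Q.
have nf := supp_tt (nesym ef) Q'' k0.
move: ne nf; rewrite /tau.
case: (tpermP s c e) => [?|?|? ?]; subst;
case: (tpermP s c f) => [?|?|? ?]; subst; try congruence;
rewrite ?tpermL ?tpermR;
try (case: (tpermP s a e) => [?|?|? ?]; subst; try congruence);
try (case: (tpermP s a f) => [?|?|? ?]; subst; try congruence);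
move=> _ _; rewrite ?tpermL ?tpermR ?tpermD; try congruence; 
first [by constructor 1 | by constructor 2 | by constructor 3 | by constructor 1; rewrite tpermC | by constructor 2; rewrite tpermC | by constructor 3; rewrite tpermC | idtac].
Qed.
End TT.

Lemma arith3 (s a c Xs Xa Xc : nat) : s != a -> s != c -> a != c ->
  Xs != Xa -> Xs != Xc -> Xa != Xc ->
  (s < a) == (Xs < Xa) -> (s < c) == (Xa < Xc) ->
  (((s < c) == (Xs < Xc)) && ((a < c) == (Xa < Xs))) !=
  (((a < c) == (Xa < Xc)) && ((s < a) == (Xs < Xc))).
Proof.
case: (ltngtP s a); case: (ltngtP s c); case: (ltngtP a c);
case: (ltngtP Xs Xa); case: (ltngtP Xs Xc); case: (ltngtP Xa Xc) => //=; lia.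
Qed.

Section Bru.
Variable n : nat.
Local Notation Sn := {perm 'I_n}.
Local Open Scope group_scope.

Lemma ell_lt (x : Sn) (i j : 'I_n) : (i < j)%N -> (x i < x j)%N ->
  (ell x < ell (tperm i j * x))%N.
Proof.
move=> ij xij.
set s := tperm i j; set y := s * x.
have yE k : y k = x (s k) by rewrite permM.
pose g (p : 'I_n * 'I_n) := if (s p.1 < s p.2)%N then (s p.1, s p.2) else p.
have gK (p : 'I_n * 'I_n) : (p.1 < p.2)%N -> g (g p) = p.
  case: (boolP (s p.1 < s p.2)%N) => H; rewrite /g ?H ?(negbTE H) /=.
    by rewrite !tpermK => H'; rewrite H' -surjective_pairing.
  by [].
rewrite /ell.
set A := [set p : 'I_n * 'I_n | _].
set B := [set p : 'I_n * 'I_n | _].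
have injg : {in A &, injective g}.
  move=> p q; rewrite !inE => /andP[p12 _] /andP[q12 _] E.
  by rewrite -(gK p p12) E gK.
rewrite -(card_in_imset injg); apply: proper_card; apply/properP; split.
  apply/subsetP => q /imsetP[p + ->]; rewrite inE => /andP[p12 xp].
  rewrite /g; case: ifP => Hs; rewrite inE /=.
    by rewrite Hs !yE !tpermK.
  case: p p12 xp Hs => p1 p2 /= p12 xp Hs.
  rewrite p12 !yE /=; move/negbT: Hs; move: p12 xp; rewrite /s.
  case: (tpermP i j p1) => [->|->|/ne_val H1 /ne_val H2]; case: (tpermP i j p2) => [->|->|/ne_val H3 /ne_val H4]; lia.
exists (i, j); first by rewrite inE /= ij !yE /s tpermL tpermR.
apply/imsetP => -[p]; rewrite inE => /andP[p12 xp] E.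
have : g (i, j) = p by rewrite E gK.
rewrite /g /= /s tpermL tpermR ltnNge (ltnW ij) /= => Ep.
by move: xp; rewrite -Ep /=; lia.
Qed.

Lemma ell_gt (x : Sn) (i j : 'I_n) : (i < j)%N -> (x j < x i)%N ->
  (ell (tperm i j * x) < ell x)%N.
Proof.
move=> ij xji; have := @ell_lt (tperm i j * x) i j ij.
by rewrite !permM tpermL tpermR mulgA tperm2 mul1g; apply.
Qed.

Lemma is_transp_tperm (i j : 'I_n) : i != j -> is_transp (tperm i j).
Proof. by move=> ij; apply/existsP; exists i; apply/existsP; exists j; rewrite ij eqxx. Qed.

Lemma bedge_tperm_lt (x : Sn) (i j : 'I_n) : (i < j)%N ->
  bedge x (tperm i j * x) = ((i < j)%N == (x i < x j)%N).
Proof.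
move=> ij.
have ijn : i != j by rewrite -val_eqE neq_ltn ij.
rewrite /bedge mulgK is_transp_tperm //= ij.
have xne : (x i : nat) != x j by rewrite val_eqE (inj_eq perm_inj).
case: (ltngtP (x i) (x j)) => [H|H|E]; first by rewrite ell_lt.
  by rewrite ltnNge ltnW // ell_gt.
by rewrite E eqxx in xne.
Qed.

Lemma bedge_tperm (x : Sn) (i j : 'I_n) : i != j ->
  bedge x (tperm i j * x) = ((i < j)%N == (x i < x j)%N).
Proof.
move=> ijn.
case: (ltngtP i j) => [H|H|/val_inj E]; first by rewrite bedge_tperm_lt // H.
  rewrite tpermC bedge_tperm_lt // H.
  have xne : (x i : nat) != x j by rewrite val_eqE (inj_eq perm_inj).
  by case: (ltngtP (x i) (x j)) => // E; rewrite E eqxx in xne.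
by rewrite E eqxx in ijn.
Qed.

Lemma bedgeP (x y : Sn) : bedge x y ->
  exists i j : 'I_n, [/\ i != j, y = tperm i j * x & (i < j)%N == (x i < x j)%N].
Proof.
move=> e; have := e; case/andP => /existsP[i /existsP[j /andP[ij /eqP E]]] _.
have yE : y = tperm i j * x by rewrite -E mulgVK.
by exists i, j; rewrite -bedge_tperm // -yE.
Qed.


Lemma K3 (x : Sn) (s a c : 'I_n) : s != a -> s != c -> a != c ->
  bedge x (tperm s a * x) -> bedge (tperm s a * x) (tperm s c * (tperm s a * x)) ->
  exists y', [/\ y' != tperm s a * x, bedge x y', bedge y' (tperm s c * (tperm s a * x)) &
     forall w, bedge x w -> bedge w (tperm s c * (tperm s a * x)) ->
       w = tperm s a * x \/ w = y'].
Proof.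
move=> sa sc ac.
have sa' : s <> a by apply/eqP.
have sc' : s <> c by apply/eqP.
have ac' : a <> c by apply/eqP.
have ca : c != a by rewrite eq_sym.
have as_ : a != s by rewrite eq_sym.
have cs : c != s by rewrite eq_sym.
set y := tperm s a * x; set z := tperm s c * y.
have xne (p q : 'I_n) : p != q -> (x p : nat) != x q.
  by move=> pq; rewrite val_eqE (inj_eq perm_inj).
set y2 := tperm s c * x; set y3 := tperm a c * x.
have z2 : z = tperm a c * y2.
  apply/permP => k; rewrite /z /y /y2 !permM; congr (x _); tpsolve.
have z3 : z = tperm s a * y3.
  apply/permP => k; rewrite /z /y /y3 !permM; congr (x _); tpsolve.
rewrite {1}/y bedge_tperm // => U1.
rewrite /z bedge_tperm // /y !permM tpermL tpermD // => U2.
have V : bedge x y2 && bedge y2 z = ((s < c)%N == (x s < x c)%N) && ((a < c)%N == (x a < x s)%N).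
  by rewrite z2 /y2 !bedge_tperm // !permM tpermD // tpermR.
have W : bedge x y3 && bedge y3 z = ((a < c)%N == (x a < x c)%N) && ((s < a)%N == (x s < x c)%N).
  by rewrite z3 /y3 !bedge_tperm // !permM tpermD // tpermL.
have A := arith3 sa sc ac (xne _ _ sa) (xne _ _ sc) (xne _ _ ac) U1 U2.
rewrite -V -W in A.
have ne2 : y2 != y.
  apply/eqP => /permP/(_ s); rewrite /y2 /y !permM !tpermL => /perm_inj E.
  by move: ac; rewrite E eqxx.
have ne3 : y3 != y.
  apply/eqP => /permP/(_ s); rewrite /y3 /y !permM tpermL tpermD // => /perm_inj E.
  by move: sa; rewrite E eqxx.
have uniq w : bedge x w -> bedge w z -> [\/ w = y, w = y2 | w = y3].
  move=> exw ewz; have [e [f [/eqP ef wE _]]] := bedgeP exw.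
  have [g [h [gh zE _]]] := bedgeP ewz.
  have Q k : tperm e f (tperm g h k) = tperm s a (tperm s c k).
    have := zE; move/(congr1 (fun p : Sn => p k)); rewrite /z /y wE !permM.
    by move/perm_inj.
  by case: (tt_supp3 sa' sc' ac' ef Q) => E; [constructor 1|constructor 2|constructor 3];
    rewrite wE E.
have [H|H] := boolP (bedge x y2 && bedge y2 z).
  exists y2; case/andP: (H) => H1 H2; split => // w exw ewz.
  case: (uniq w exw ewz) => [->|->|E]; [by left|by right|].
  by move: A; rewrite H -E exw ewz.
move: A; rewrite (negbTE H) /= ?negbK => /andP[H1 H2].
exists y3; split => // w exw ewz.
case: (uniq w exw ewz) => [->|E|->]; [by left| |by right].
by move: H; rewrite -E exw ewz.
Qed.

Lemma K (x y z : Sn) : bedge x y -> bedge y z ->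
  exists y', [/\ y' != y, bedge x y', bedge y' z &
     forall w, bedge x w -> bedge w z -> w = y \/ w = y'].
Proof.
move=> exy eyz.
have lxy : (ell x < ell y)%N by case/andP: exy.
have lyz : (ell y < ell z)%N by case/andP: eyz.
have [a [b [ab yE _]]] := bedgeP exy.
have [c [d [cd zE _]]] := bedgeP eyz.
have ab' : a <> b by apply/eqP.
have cd' : c <> d by apply/eqP.
case: (eqVneq c a) => [Eca|ca].
  subst c; case: (eqVneq d b) => [Edb|db].
    subst d; move: lxy lyz; rewrite zE yE mulgA tperm2 mul1g; lia.
  have bd : b != d by rewrite eq_sym.
  subst y z; exact: K3.
case: (eqVneq c b) => [Ecb|cb].
  subst c; case: (eqVneq d a) => [Eda|da].
    subst d; move: lxy lyz; rewrite zE yE mulgA tpermC tperm2 mul1g; lia.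
  have ad : a != d by rewrite eq_sym.
  have ba : b != a by rewrite eq_sym.
  subst y z; move: exy eyz; rewrite [tperm a b]tpermC => exy eyz.
  exact: K3.
case: (eqVneq d a) => [Eda|da].
  subst d; have bc : b != c by rewrite eq_sym.
  have ac : a != c by rewrite eq_sym.
  subst y z; move: exy eyz; rewrite [tperm c a]tpermC => exy eyz.
  exact: K3.
case: (eqVneq d b) => [Edb|db].
  subst d; have ba : b != a by rewrite eq_sym.
  have bc : b != c by rewrite eq_sym.
  have ac : a != c by rewrite eq_sym.
  subst y z; move: exy eyz; rewrite [tperm c b]tpermC [tperm a b]tpermC => exy eyz.
  exact: K3.
have ca' : c <> a by apply/eqP.
have cb' : c <> b by apply/eqP.
have da' : d <> a by apply/eqP.
have db' : d <> b by apply/eqP.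
have ac : a != c by rewrite eq_sym.
have ad : a != d by rewrite eq_sym.
have bc : b != c by rewrite eq_sym.
have bd : b != d by rewrite eq_sym.
have comm : tperm c d * tperm a b = tperm a b * tperm c d.
  apply/permP => k; rewrite !permM; tpsolve.
exists (tperm c d * x); split.
- apply/eqP => /permP/(_ a); rewrite yE !permM tpermL tpermD // => /perm_inj E.
  by move: ab; rewrite E eqxx.
- rewrite bedge_tperm //.
  by move: eyz; rewrite zE bedge_tperm // yE !permM !tpermD.
- rewrite zE yE mulgA comm -mulgA bedge_tperm // !permM !tpermD //.
  by move: exy; rewrite yE bedge_tperm.
- move=> w exw ewz; have [e [f [/eqP ef wE _]]] := bedgeP exw.
  have [g [h [/eqP gh zE' _]]] := bedgeP ewz.
  have Q k : tperm e f (tperm g h k) = tperm a b (tperm c d k).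
    have := zE'; rewrite zE yE wE => /(congr1 (fun p : Sn => p k)); rewrite !permM.
    by move/perm_inj/esym.
  by case: (tt_disj ab' cd' ef gh ca' cb' da' db' Q) => E; [left; rewrite yE|right]; rewrite wE E.
Qed.

End Bru.


Section FlipMid.
Variable n : nat.
Local Notation Sn := {perm 'I_n}.

Lemma flip_mid_K (x y z y' : Sn) : y' != y -> bedge x y' -> bedge y' z ->
  (forall w, bedge x w -> bedge w z -> w = y \/ w = y') -> flip_mid x y z = y'.
Proof.
move=> ne xy' y'z U; rewrite /flip_mid; case: pickP => [w /and3P[wy xw wz]|none] /=.
  by case: (U w xw wz) => // E; rewrite E eqxx in wy.
by move: (none y'); rewrite ne xy' y'z.
Qed.

Lemma flip_mid_spec (x y z : Sn) : bedge x y -> bedge y z ->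
  exists y', [/\ flip_mid x y z = y', y' != y, bedge x y', bedge y' z &
     forall w, bedge x w -> bedge w z -> w = y \/ w = y'].
Proof.
move=> xy yz; have [y' [ne xy' y'z U]] := K xy yz.
by exists y'; split => //; apply: flip_mid_K.
Qed.

Lemma flip_mid_inv (x y z : Sn) : bedge x y -> bedge y z ->
  flip_mid x (flip_mid x y z) z = y.
Proof.
move=> xy yz; have [y' [-> ne xy' y'z U]] := flip_mid_spec xy yz.
apply: flip_mid_K => //; first by rewrite eq_sym.
by move=> w xw wz; case: (U w xw wz); [right|left].
Qed.

Lemma flip_mid_edges (x y z : Sn) : bedge x y -> bedge y z ->
  bedge x (flip_mid x y z) && bedge (flip_mid x y z) z.
Proof.
by move=> xy yz; have [y' [-> ne xy' y'z U]] := flip_mid_spec xy yz; rewrite xy' y'z.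
Qed.
End FlipMid.

Section Paths.
Variables (n h : nat).
Local Notation Sn := {perm 'I_n}.
Local Notation V := (Sn * 'I_h.+1)%type.

Lemma tat_ord (T : Type) (t : h.+1.-tuple T) (k : 'I_h.+1) : tat t k = tnth t k.
Proof. by rewrite /tat inord_val. Qed.

Lemma inord_nat (k : nat) : k <= h -> ((inord k : 'I_h.+1) : nat) = k.
Proof. by move=> hk; rewrite inordK. Qed.

Lemma tat_flip (G : h.+1.-tuple Sn) i k : k <= h ->
  tat (flip i G) k = if k == i then flip_mid (tat G i.-1) (tat G i) (tat G i.+1) else tat G k.
Proof. by move=> hk; rewrite {1}/tat /flip tnth_mktuple inordK. Qed.

Lemma tnth_flip (G : h.+1.-tuple Sn) i (k : 'I_h.+1) :
  tnth (flip i G) k = if (k : nat) == i then flip_mid (tat G i.-1) (tat G i) (tat G i.+1) else tnth G k.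
Proof. by rewrite /flip tnth_mktuple. Qed.

Lemma bpath_edge (u v : Sn) (G : h.+1.-tuple Sn) k : G \in Pset h u v -> k < h ->
  bedge (tat G k) (tat G k.+1).
Proof.
rewrite inE => /and3P[_ _ /forallP E] kh.
exact: (E (Ordinal kh)).
Qed.

Lemma bpath_ends (u v : Sn) (G : h.+1.-tuple Sn) : G \in Pset h u v ->
  tat G 0 = u /\ tat G h = v.
Proof. by rewrite inE => /and3P[/eqP -> /eqP -> _]. Qed.

Lemma flip_Pset (u v : Sn) (G : h.+1.-tuple Sn) i : G \in Pset h u v -> 0 < i < h ->
  flip i G \in Pset h u v.
Proof.
move=> GP /andP[i0 ih]; have [G0 Gh] := bpath_ends GP.
have Hi : i.-1 < h by lia.
have e1 : bedge (tat G i.-1) (tat G i) by have := bpath_edge GP Hi; rewrite prednK.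
have e2 : bedge (tat G i) (tat G i.+1) by exact: bpath_edge GP ih.
have := flip_mid_edges e1 e2; case/andP=> m1 m2.
rewrite inE; apply/and3P; split.
- by rewrite tat_flip // (_ : (0 == i) = false) ?G0 //; lia.
- by rewrite tat_flip // (_ : (h == i) = false) ?Gh //; lia.
apply/forallP => k; have kh := ltn_ord k.
rewrite !tat_flip; try lia; case: (eqVneq (k : nat) i) => [E|ne].
  by rewrite E (_ : (i.+1 == i) = false) //; lia.
case: (eqVneq (k.+1) i) => [E|ne2]; last exact: bpath_edge GP kh.
have -> : (k : nat) = i.-1 by lia.
exact: m1.
Qed.

Lemma flip_invol (u v : Sn) (G : h.+1.-tuple Sn) i : G \in Pset h u v -> 0 < i < h ->
  flip i (flip i G) = G.
Proof.
move=> GP /andP[i0 ih].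
have Hi : i.-1 < h by lia.
have e1 : bedge (tat G i.-1) (tat G i) by have := bpath_edge GP Hi; rewrite prednK.
have e2 : bedge (tat G i) (tat G i.+1) by exact: bpath_edge GP ih.
apply: eq_from_tnth => k; rewrite tnth_flip; case: eqP => [E|ne]; last by rewrite tnth_flip; case: eqP.
rewrite !tat_flip; try lia.
rewrite eqxx (_ : (i.-1 == i) = false); last lia.
rewrite (_ : (i.+1 == i) = false); last lia.
by rewrite flip_mid_inv // -E tat_ord.
Qed.

Lemma iTS_inj : injective (@iTS n h).
Proof.
move=> G1 G2 E; apply: eq_from_tnth => k.
by have := congr1 (fun t => (tnth t k).1) E; rewrite /iTS !tnth_mktuple.
Qed.

Lemma tat_iTS (G : h.+1.-tuple Sn) k : tat (iTS G) k = (tat G k, inord k).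
Proof. by rewrite /tat /iTS tnth_mktuple. Qed.

End Paths.


Section FC.
Variables (n h : nat) (u v : {perm 'I_n}) (F : {set h.+1.-tuple {perm 'I_n}}).
Local Notation Sn := {perm 'I_n}.
Local Notation V := (Sn * 'I_h.+1)%type.
Hypothesis FC : flipclass F u v.

Definition inrange (i : nat) := 1 <= i <= h.-1.
Lemma inrangeP i : (1 <= i <= h.-1) -> 0 < i < h.
Proof. lia. Qed.

Lemma fold_Pset (w : seq nat) G : all (fun i => 1 <= i <= h.-1) w -> G \in Pset h u v ->
  foldr (@flip n h) G w \in Pset h u v.
Proof.
elim: w => //= i w IH /andP[ir wr] GP.
by apply: flip_Pset; [exact: IH | exact: inrangeP].
Qed.

Lemma fold_rev (w : seq nat) G : all (fun i => 1 <= i <= h.-1) w -> G \in Pset h u v ->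
  foldr (@flip n h) (foldr (@flip n h) G w) (rev w) = G.
Proof.
elim: w G => //= i w IH G /andP[ir wr] GP.
rewrite rev_cons -cats1 foldr_cat /= (@flip_invol _ _ u v); first exact: IH.
  exact: fold_Pset.
exact: inrangeP.
Qed.

Lemma F_Pset G : G \in F -> G \in Pset h u v.
Proof.
case: FC => G0 G0P FE; case/FE => w [wr <-]; exact: fold_Pset.
Qed.

Lemma F_flip G i : G \in F -> 0 < i < h -> flip i G \in F.
Proof.
case: FC => G0 G0P FE; case/FE => w [wr <-] ir; apply/FE.
exists (i :: w); split => //=; rewrite wr andbT; lia.
Qed.

Lemma F_fold G w : G \in F -> all (fun i => 1 <= i <= h.-1) w -> foldr (@flip n h) G w \in F.
Proof.
elim: w => //= i w IH GF /andP[ir wr]; apply: F_flip; [exact: IH | exact: inrangeP].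
Qed.

Lemma F_reach G G' : G \in F -> G' \in F -> gen_reach (@flip n h) 1 h.-1 G G'.
Proof.
case: FC => G0 G0P FE; case/FE => w [wr <-]; case/FE => w' [wr' <-].
exists (w' ++ rev w); split; first by rewrite all_cat wr' all_rev wr.
by rewrite foldr_cat fold_rev.
Qed.

Lemma F_nonempty : exists G, G \in F.
Proof. case: FC => G0 G0P FE; exists G0; apply/FE; by exists [::]. Qed.

Lemma TSedge_time (p q : V) : TSedge F p q -> (q.2 : nat) = (p.2 : nat).+1.
Proof. by case/andP => /eqP. Qed.

Lemma TSedge_bedge (p q : V) : TSedge F p q -> bedge p.1 q.1.
Proof.
case/andP => /eqP E /exists_inP[G GF /andP[/eqP E1 /eqP E2]].
have GP := F_Pset GF.
have ph : (p.2 : nat) < h by have := ltn_ord q.2; lia.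
have := bpath_edge GP ph; rewrite -E1 -E2 -!tat_ord.
by rewrite /tat -E.
Qed.

Lemma TSedge_vert (p q : V) : TSedge F p q -> (p \in TSvert F) && (q \in TSvert F).
Proof.
case/andP => _ /exists_inP[G GF /andP[E1 E2]].
by rewrite !inE; apply/andP; split; apply/exists_inP; exists G.
Qed.

Lemma path_time (p : V) s : path (TSedge F) p s -> ((last p s).2 : nat) = (p.2 : nat) + size s.
Proof.
elim: s p => [|q s IH] p /=; first by rewrite addn0.
by case/andP => /TSedge_time E /IH ->; rewrite E addSnnS.
Qed.

Lemma TSle_time (p q : V) : TSle F p q -> (p.2 : nat) <= q.2.
Proof. by case/connectP => s /path_time + -> => ->; rewrite leq_addr. Qed.

Lemma TSle_eq (p q : V) : TSle F p q -> (p.2 : nat) = q.2 -> p = q.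
Proof.
case/connectP => s /path_time + -> => -> /eqP.
by rewrite -[X in X == _]addn0 eqn_add2l; case: s.
Qed.

Lemma TSle_1 (p q : V) : TSle F p q -> (q.2 : nat) = (p.2 : nat).+1 -> TSedge F p q.
Proof.
case/connectP => s P ->; have := path_time P.
case: s P => [|a [|b s]] /=.
- move=> _ E1 E2; move: E1; rewrite E2; lia.
- by case/andP.
- move=> _ E1 E2; move: E1; rewrite E2; lia.
Qed.

Lemma intervalE (p q w : V) : (q.2 : nat) = (p.2 : nat).+2 ->
  (w \in TSinterval F p q :\ p :\ q) = TSedge F p w && TSedge F w q.
Proof.
move=> Ept; rewrite !in_setD1 /TSinterval in_set; apply/idP/idP.
  case/and4P => wq wp wv /andP[pw wq'].
  have t1 := TSle_time pw; have t2 := TSle_time wq'.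
  have n1 : (p.2 : nat) != w.2 by apply/eqP => /(TSle_eq pw) E; rewrite E eqxx in wp.
  have n2 : (w.2 : nat) != q.2 by apply/eqP => /(TSle_eq wq') E; rewrite E eqxx in wq.
  by rewrite TSle_1 ?(TSle_1 wq'); lia.
case/andP => pw wq.
have t1 := TSedge_time pw; have t2 := TSedge_time wq.
rewrite (proj2 (andP (TSedge_vert pw))) /TSle (connect1 pw) (connect1 wq) !andbT.
apply/andP; split; apply/eqP => E; move: t1 t2; rewrite E; lia.
Qed.

Lemma iTS_edge G (k : nat) : G \in F -> k < h ->
  TSedge F (tat G k, inord k) (tat G k.+1, inord k.+1).
Proof.
move=> GF kh; apply/andP; split; first by rewrite /= !inordK //; lia.
by apply/exists_inP; exists G => //=; rewrite /tat !eqxx.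
Qed.

Lemma iTS_PTS G : G \in F -> iTS G \in PTS F u v.
Proof.
move=> GF; have [G0 Gh] := bpath_ends (F_Pset GF).
rewrite inE; apply/and3P; split.
- by rewrite tat_iTS G0 (_ : inord 0 = ord0) //; apply: val_inj; rewrite /= inordK.
- by rewrite tat_iTS Gh (_ : inord h = ord_max) //; apply: val_inj; rewrite /= inordK.
apply/forallP => k; rewrite !tat_iTS; exact: iTS_edge.
Qed.

End FC.


Ltac flia := repeat match goal with
  | H : context [bedge _ _] |- _ => clear H
  | H : context [TSedge _ _ _] |- _ => clear H
  | H : context [TSle _ _ _] |- _ => clear H
  | H : is_true (_ \in _) |- _ => clear H
  end; lia.

Section FB.
Variables (n h : nat) (u v : {perm 'I_n}) (F : {set h.+1.-tuple {perm 'I_n}}).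
Local Notation Sn := {perm 'I_n}.
Local Notation V := (Sn * 'I_h.+1)%type.
Hypothesis FC : flipclass F u v.

Lemma tnth_iTS (G : h.+1.-tuple Sn) j : tnth (iTS G) j = (tnth G j, j).
Proof. by rewrite /iTS tnth_mktuple. Qed.

Lemma FB G i : G \in F -> 0 < i < h -> fbar F i (iTS G) = iTS (flip i G).
Proof.
move=> GF /andP[i0 ih]; have GP := F_Pset FC GF.
set x := tat G i.-1; set y := tat G i; set z := tat G i.+1.
have Hi : i.-1 < h by flia.
have e1 : bedge x y by have := bpath_edge GP Hi; rewrite prednK.
have e2 : bedge y z by exact: bpath_edge GP ih.
have [y' [my' ne xy' y'z U]] := flip_mid_spec e1 e2.
have G'F : flip i G \in F by apply: (F_flip FC) => //; flia.
apply: eq_from_tnth => j; rewrite {1}/fbar tnth_mktuple !tnth_iTS tnth_flip.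
case: eqP => [E|_]; last by [].
rewrite -/x -/y -/z my'.
have jE : j = inord i by apply: val_inj; rewrite /= inordK //; flia.
rewrite !tat_iTS -/x -/y -/z.
have t1 : tat (flip i G) i.-1 = x by rewrite tat_flip; [rewrite ifF //; flia | flia].
have t2 : tat (flip i G) i = y' by rewrite tat_flip ?eqxx //; flia.
have t3 : tat (flip i G) i.+1 = z by rewrite tat_flip; [rewrite ifF //; flia | flia].
have XM : TSedge F (x, inord i.-1) (y', j).
  have := iTS_edge G'F Hi; rewrite prednK // t1 -jE.
  by rewrite t2.
have MZ : TSedge F (y', j) (z, inord i.+1).
  by have := iTS_edge G'F ih; rewrite t2 t3 -jE.
have Et : ((inord i.+1 : 'I_h.+1) : nat) = ((inord i.-1 : 'I_h.+1) : nat).+2.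
  rewrite !inordK; flia.
have Min : (y', j) \in TSinterval F (x, inord i.-1) (z, inord i.+1) :\ (x, inord i.-1) :\ (z, inord i.+1).
  by rewrite intervalE // XM MZ.
rewrite /TSmid; case: pickP => [w /andP[wI /and3P[wX wZ wY]] | none] /=; last first.
  have MY : (y', j) != (y, inord i) by apply/eqP => -[E' _]; rewrite E' eqxx in ne.
  move: (none (y', j)) => /=; move: Min; rewrite !in_setD1 => /and3P[MZ' MX' MI].
  by rewrite MI MZ' MX' MY.
have : w \in TSinterval F (x, inord i.-1) (z, inord i.+1) :\ (x, inord i.-1) :\ (z, inord i.+1).
  by rewrite !in_setD1 wI wX wZ.
rewrite intervalE // => /andP[Xw wZ'].
have tw := TSedge_time Xw.
have w2 : w.2 = j.
  have ih1 : i < h.+1 by rewrite ltnS ltnW.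
  have ih2 : i.-1 < h.+1 by rewrite ltnS; apply: leq_trans (leq_pred i) (ltnW ih).
  have ih3 : i <= h.+1 by apply: leq_trans (ltnW ih) (leqnSn h).
  by apply: val_inj => /=; rewrite tw jE /= !inordK ?prednK.
case: (U w.1 (TSedge_bedge FC Xw) (TSedge_bedge FC wZ')) => E1.
  by move: wY; rewrite [w]surjective_pairing E1 w2 jE eqxx.
by rewrite [w]surjective_pairing E1 w2.
Qed.

Lemma fold_fbar G w : G \in F -> all (fun i => 1 <= i <= h.-1) w ->
  foldr (fbar F) (iTS G) w = iTS (foldr (@flip n h) G w).
Proof.
move=> GF; elim: w => //= i w IH /andP[ir wr].
rewrite IH // FB //.
  exact: (F_fold FC).
exact: inrangeP.
Qed.

End FB.


Section Dia.
Variables (n h : nat) (u v : {perm 'I_n}) (F : {set h.+1.-tuple {perm 'I_n}}).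
Local Notation Sn := {perm 'I_n}.
Local Notation V := (Sn * 'I_h.+1)%type.
Hypothesis FC : flipclass F u v.

Lemma dia_part (img : [set iTS G | G in F] = PTS F u v) (p q : V) :
  p \in TSvert F -> q \in TSvert F -> (q.2 : nat) = (p.2 : nat).+2 -> TSle F p q ->
  diamond F p q.
Proof.
move=> pv qv Et pq.
set i := (p.2 : nat).
have qh : i.+2 <= h by have := ltn_ord q.2; rewrite Et.
have [w0 /andP[pw0 w0q]] : exists w0, TSedge F p w0 && TSedge F w0 q.
  case/connectP: pq => s P E; have := path_time P; rewrite -E Et.
  case: s P E => [|a [|b [|c s]]] /= P E T; try flia.
  by exists a; case/and3P: P => -> + _; rewrite E.
move: pv qv; rewrite !inE => /exists_inP[G1 G1F /eqP E1] /exists_inP[G2 G2F /eqP E2].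
have [G1u _] := bpath_ends (F_Pset FC G1F).
have [_ G2v] := bpath_ends (F_Pset FC G2F).
pose H := [tuple if (k : nat) <= i then tnth G1 k else if (k : nat) == i.+1 then w0.1 else tnth G2 k | k < h.+1].
have tatH k : k <= h -> tat H k = if k <= i then tat G1 k else if k == i.+1 then w0.1 else tat G2 k.
  by move=> kh; rewrite /tat tnth_mktuple inordK.
clearbody H.
have ip : (inord i : 'I_h.+1) = p.2 by rewrite inord_val.
have w02 : (inord i.+1 : 'I_h.+1) = w0.2.
  by apply: val_inj => /=; rewrite inordK ?(TSedge_time pw0) //; flia.
have q2 : (inord i.+2 : 'I_h.+1) = q.2.
  by apply: val_inj => /=; rewrite inordK ?Et //; flia.
have G1i : tat G1 i = p.1 by rewrite /tat ip.
have G2i : tat G2 i.+2 = q.1 by rewrite /tat q2.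
clearbody i.

have HP : iTS H \in PTS F u v.
  rewrite inE; apply/and3P; split.
  - rewrite tat_iTS tatH // leq0n G1u (_ : inord 0 = ord0) //.
    by apply: val_inj; rewrite /= inordK.
  - rewrite tat_iTS tatH // ifF; last flia.
    rewrite ifF; last flia.
    by rewrite G2v (_ : inord h = ord_max) //; apply: val_inj; rewrite /= inordK.
  apply/forallP => k; have kh := ltn_ord k.
  rewrite !tat_iTS !tatH //; try flia.
  case: (leqP k.+1 i) => [ki|ik].
    rewrite ifT; last flia.
    exact: iTS_edge.
  case: (ltngtP k i.+1) => [ki'|ik'|ki'].
  - have -> : (k : nat) = i by clear -ki' ik; flia.
    rewrite ifT // eqxx /=.
    by rewrite G1i ip w02 -!surjective_pairing.
  - rewrite ifF; last flia.
    rewrite ifF; last flia.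
    exact: iTS_edge.
  - rewrite ki' ltnn /= ifF; last flia.
    by rewrite G2i w02 q2 -!surjective_pairing.
have HF : H \in F.
  by move: HP; rewrite -img => /imsetP[G GF /iTS_inj ->].
have e1 := TSedge_bedge FC pw0; have e2 := TSedge_bedge FC w0q.
have [y' [my' ne xy' y'z U]] := flip_mid_spec e1 e2.
have ih : i < h by apply: ltnW.
have i1h : 0 < i.+1 < h by rewrite qh.
have H'F : flip i.+1 H \in F by exact: (F_flip FC).
have Hi : tat H i = p.1 by rewrite tatH ?leqnn //; flia.
have Hi1 : tat H i.+1 = w0.1 by rewrite tatH ?eqxx; [rewrite ifF //; flia | flia].
have Hi2 : tat H i.+2 = q.1 by rewrite tatH //; rewrite ifF; [rewrite ifF //; flia | flia].
have H'i : tat (flip i.+1 H) i = p.1 by rewrite tat_flip; [rewrite ifF //; flia | flia].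
have H'i1 : tat (flip i.+1 H) i.+1 = y' by rewrite tat_flip ?eqxx // Hi Hi1 Hi2.
have H'i2 : tat (flip i.+1 H) i.+2 = q.1 by rewrite tat_flip; [rewrite ifF //; flia | flia].
have pM : TSedge F p (y', w0.2).
  by have := iTS_edge H'F ih; rewrite H'i H'i1 ip w02 -surjective_pairing.
have Mq : TSedge F (y', w0.2) q.
  have i1h' : i.+1 < h by flia.
  by have := iTS_edge H'F i1h'; rewrite H'i1 H'i2 w02 q2 -surjective_pairing.
rewrite /diamond.
have -> : TSinterval F p q :\ p :\ q = [set w0; (y', w0.2)].
  apply/setP => w; rewrite intervalE // !inE; apply/idP/idP.
    case/andP => pw wq.
    have tw : w.2 = w0.2.
      by apply: val_inj => /=; rewrite (TSedge_time pw) (TSedge_time pw0).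
    case: (U w.1 (TSedge_bedge FC pw) (TSedge_bedge FC wq)) => E.
      by rewrite [w]surjective_pairing E tw -surjective_pairing eqxx.
    by rewrite [w]surjective_pairing E tw eqxx orbT.
  by case/orP => /eqP ->; rewrite ?pw0 ?w0q ?pM ?Mq.
have nM : w0 != (y', w0.2).
  by apply/eqP => E; move: ne; rewrite (congr1 fst E) /= eqxx.
by rewrite cards2 nM.
Qed.

End Dia.

Unset Implicit Arguments.

Theorem lemma5p7 (n h : nat) (u v : {perm 'I_n})
    (F : {set h.+1.-tuple {perm 'I_n}}) :
  bruhat_lt u v -> flipclass F u v ->
  ( ({in F &, injective (@iTS n h)} /\ [set iTS G | G in F] = PTS F u v)
    <->
    ( (forall p q : {perm 'I_n} * 'I_h.+1,
         p \in TSvert F -> q \in TSvert F ->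
         (q.2 : nat) = (p.2 : nat).+2 -> TSle F p q -> diamond F p q)
      /\
      (forall p q, p \in PTS F u v -> q \in PTS F u v ->
         gen_reach (@fbar n h F) 1 h.-1 p q) ) ).
Proof.
move=> _ FC; split.
- case=> _ img; split; first exact: (dia_part FC img).
  move=> p q; rewrite -img => /imsetP[G GF ->] /imsetP[G' G'F ->].
  have [w [wr <-]] := F_reach FC GF G'F.
  by exists w; split => //; rewrite (fold_fbar FC).
- case=> _ R; split; first by move=> G1 G2 _ _; apply: iTS_inj.
  apply/setP => p; apply/imsetP/idP.
    by case=> G GF ->; apply: iTS_PTS.
  move=> pP; have [G0 G0F] := F_nonempty FC.
  have [w [wr <-]] := R _ _ (iTS_PTS FC G0F) pP.
  exists (foldr (@flip n h) G0 w); first exact: (F_fold FC).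
  by rewrite (fold_fbar FC).
Qed.
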